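(* Let $IS$ be an ISRL with model $M$ and $\varphi$ a formula of the $A\bar BN$ fragment of EHS$^{+}$. If $I,I'$ are intervals of $M$ with $\mathrm{g}(I)=\mathrm{g}(I')$, then $MCT_I^\varphi=MCT_{I'}^\varphi$.
   Context: **Regular expressions.** For a finite alphabet $X$, $RE_X$ is the set of regular expressions $e ::= \emptyset \mid \epsilon \mid s \mid e;e \mid e+e \mid e^*$ with $s\in X$. $L(e)$ denotes the standard language of $e$. **ISRL.** Fix agents $A=\{0,\dots,m\}$ and a finite set $\mathit{Var}$ of propositional variables. An ISRL is $IS=(\{L_i\},\{l_i^0\},\{ACT_i\},\{P_i\},\{t_i\},\lambda)$ where, for each $i\in A$: - $L_i$ is a finite set of local states and $l_i^0\in L_i$; - $ACT_i$ is a finite set of actions and $P_i:L_i\to 2^{ACT_i}$; - $t_i\subseteq L_i\times ACT\times L_i$, with $ACT=ACT_0\times\dots\times ACT_m$; - $\lambda:\mathit{Var}\to RE_G$, where $G=L_0\times\dots\times L_m$. $t^G((l_0,\dots,l_m),(l'_0,\dots,l'_m))$ holds iff some $(a_0,\dots,a_m)\in ACT$ has $a_i\in P_i(l_i)$ and $(l_i,(a_0,\dots,a_m),l'_i)\in t_i$ for all $i$. **Model of $IS$.** - States $S$ are the nonempty sequences $g_0\dots g_k$ with $g_0=(l_0^0,\dots,l_m^0)$ and $t^G(g_j,g_{j+1})$ for all $j<k$. - $t(g_0\dots g_k,g'_0\dots g'_l)$ iff $l=k+1$ and $g_j=g'_j$ for all $j\le k$. - $g_0\dots g_k\sim_i g'_0\dots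 g'_l$ iff $g_k,g'_l$ have the same $i$-th component. - $\mathrm{g}(g_0\dots g_k)=g_k$. **Intervals.** An interval is a nonempty sequence $I=s_1\dots s_n$ of states with $t(s_j,s_{j+1})$; $\mathit{first}(I)=s_1$, $\mathit{last}(I)=s_n$, $\mathrm{g}(I)=\mathrm{g}(s_1)\dots\mathrm{g}(s_n)$, and $\mathit{pi}(I)$ iff $n=1$. **Relations.** - $I\sim_i I'$ iff $|I|=|I'|$ and the states are pointwise $\sim_i$-related; $\sim_\Gamma$ is the transitive closure of $\bigcup_{i\in\Gamma}\sim_i$. - $I R_A I'$ iff $\mathit{first}(I')=\mathit{last}(I)$. - $I R_{\bar B} I'$ iff $I'=II_1$ for some interval $I_1$. - $I R_N I'$ iff $t(\mathit{last}(I),\mathit{first}(I'))$. - $R_{K_i}=\sim_i$, $R_{C_\Gamma}=\sim_\Gamma$, $R_{\langle A\rangle}=R_A$, $R_{\langle\bar B\rangle}=R_{\bar B}$, $R_{\langle N\rangle}=R_N$. **$A\bar BN$ fragment of EHS$^{+}$.** Syntax: $\varphi::=\mathit{pi}\mid p\mid\neg\varphi\mid\varphi\wedge\varphi\mid K_i\varphi\mid C_\Gamma\varphi\mid\langle A\rangle\varphi\mid\langle\bar B\rangle\varphi\mid\langle N\rangle\varphi$. A top-level sub-formula of $\varphi$ is a sub-formula of the form $X\psi$ with $X$ one of these modalities that is not in the scope of any modality. **Automata.** For $p\in\mathit{Var}$ let $\mathcal A^p$ be the minimal complete deterministic finite automaton for $L(\lambda(p))$ over alphabet $G$. $\mathcal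 A_I$ maps each $p$ to the state of $\mathcal A^p$ reached after reading $\mathrm{g}(I)$. **Modal context tree.** $MCT_I^\varphi$ is defined by recursion on $\varphi$ as the pair consisting of: - the root label $(\mathrm{g}(\mathit{first}(I)),\mathrm{g}(\mathit{last}(I)),\mathit{pi}(I),\mathcal A_I)$; - for each top-level sub-formula $X\psi$ of $\varphi$, the set $\{MCT_{I'}^\psi : I R_X I'\}$. *)

(* Defs.v *)
From HB Require Import structures.
From Stdlib Require Import Relation_Operators.
From mathcomp Require Import all_boot.
Set Implicit Arguments. Unset Strict Implicit. Unset Printing Implicit Defensive.

Inductive re (X : Type) : Type :=
| ReEmpty | ReEps | ReSym (s : X) | ReSeq (e1 e2 : re X) | ReAlt (e1 e2 : re X)
| ReStar (e : re X).
Arguments ReEmpty {X}. Arguments ReEps {X}.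

Inductive star_lang (X : Type) (Lg : seq X -> Prop) : seq X -> Prop :=
| star_nil : star_lang Lg [::]
| star_app u v : Lg u -> star_lang Lg v -> star_lang Lg (u ++ v).

Fixpoint lang (X : Type) (e : re X) : seq X -> Prop :=
  match e with
  | ReEmpty => fun _ => False
  | ReEps => fun w => w = [::]
  | ReSym s => fun w => w = [:: s]
  | ReSeq e1 e2 => fun w => exists u v, w = u ++ v /\ lang e1 u /\ lang e2 v
  | ReAlt e1 e2 => fun w => lang e1 w \/ lang e2 w
  | ReStar e1 => star_lang (lang e1)
  end.

Record dfa (X : Type) := Dfa {
  dstate : finType;
  dinit : dstate;
  ddelta : dstate -> X -> dstate;
  dfinal : {set dstate} }.

Definition drun_from (X : Type) (A : dfa X) (q : dstate A) (w : seq X) : dstate A :=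
  foldl (@ddelta X A) q w.
Definition drun (X : Type) (A : dfa X) (w : seq X) : dstate A := drun_from (dinit A) w.

Definition minimal_dfa_for (X : Type) (A : dfa X) (e : re X) : Prop :=
  [/\ (forall w, drun A w \in dfinal A <-> lang e w),
      (forall q : dstate A, exists w, drun A w = q) &
      (forall q q' : dstate A, q <> q' ->
         exists u, (drun_from q u \in dfinal A) <> (drun_from q' u \in dfinal A))].

Inductive form (m : nat) (Var : Type) : Type :=
| FPi
| FVar (p : Var)
| FNeg (f : form m Var)
| FAnd (f g : form m Var)
| FK (i : 'I_m.+1) (f : form m Var)
| FC (Gam : {set 'I_m.+1}) (f : form m Var)
| FA (f : form m Var)
| FBbar (f : form m Var)
| FN (f : form m Var).
Arguments FPi {m Var}.

Section ISRL.
Variables (m : nat) (L ACT : 'I_m.+1 -> finType) (Var : finType).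

Definition gstate := forall i : 'I_m.+1, L i.
Definition jaction := forall i : 'I_m.+1, ACT i.

Record ISRL := MkISRL {
  l0 : forall i, L i;
  Prot : forall i, L i -> {set ACT i};
  trans : forall i, L i -> jaction -> L i -> Prop;
  lambda : Var -> re gstate }.

Variable IS : ISRL.
Variable aut : Var -> dfa gstate.

Definition ginit : gstate := fun i => l0 IS i.

Definition tG (g g' : gstate) : Prop :=
  exists a : jaction, forall i, a i \in Prot IS (g i) /\ trans IS (g i) a (g' i).

Fixpoint chainP (T : Type) (R : T -> T -> Prop) (x : T) (s : seq T) : Prop :=
  match s with
  | [::] => True
  | y :: s' => R x y /\ chainP R y s'
  end.

Definition mstate := seq gstate.
Definition is_state (s : mstate) : Prop :=
  match s with
  | [::] => False
  | g0 :: rest => g0 = ginit /\ chainP tG g0 rest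
  end.

Definition tM (s s' : mstate) : Prop := exists g, s' = rcons s g.

Definition gof (s : mstate) : gstate := last ginit s.

Definition simS (i : 'I_m.+1) (s s' : mstate) : Prop := gof s i = gof s' i.

Fixpoint allPr (T : Type) (P : T -> Prop) (s : seq T) : Prop :=
  match s with [::] => True | x :: s' => P x /\ allPr P s' end.

Definition interval := seq mstate.
Definition is_interval (I : interval) : Prop :=
  match I with
  | [::] => False
  | s1 :: rest => allPr is_state I /\ chainP tM s1 rest
  end.

Definition ifirst (I : interval) : mstate := head [::] I.
Definition ilast (I : interval) : mstate := last [::] I.
Definition gI (I : interval) : seq gstate := map gof I.
Definition ipi (I : interval) : bool := size I == 1.

Fixpoint forall2P (T : Type) (R : T -> T -> Prop) (s t : seq T) : Prop :=
  match s, t with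
  | [::], [::] => True
  | x :: s', y :: t' => R x y /\ forall2P R s' t'
  | _, _ => False
  end.

(* relations on intervals (the target is always required to be an interval of M) *)
Definition RK (i : 'I_m.+1) (I J : interval) : Prop :=
  is_interval J /\ forall2P (simS i) I J.
Definition RC (Gam : {set 'I_m.+1}) : interval -> interval -> Prop :=
  clos_trans interval (fun I J => is_interval I /\ exists2 i, i \in Gam & RK i I J).
Definition RA (I J : interval) : Prop := is_interval J /\ ifirst J = ilast I.
Definition RBbar (I J : interval) : Prop :=
  is_interval J /\ exists I1, is_interval I1 /\ J = I ++ I1.
Definition RN (I J : interval) : Prop := is_interval J /\ tM (ilast I) (ifirst J).

Definition Label : Type :=
  (gstate * gstate * bool * (forall p : Var, dstate (aut p)))%type.

Definition label (I : interval) : Label :=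
  (gof (ifirst I), gof (ilast I), ipi I, fun p => drun (aut p) (gI I)).

(* One component (a set of MCTs for psi) per top-level sub-formula X psi,
   in left-to-right order of occurrence. *)
Fixpoint Ch (phi : form m Var) : Type :=
  match phi with
  | FPi | FVar _ => unit
  | FNeg a => Ch a
  | FAnd a b => (Ch a * Ch b)%type
  | FK _ a | FC _ a | FA a | FBbar a | FN a => (Label * Ch a)%type -> Prop
  end.

Definition MCTtype (phi : form m Var) : Type := (Label * Ch phi)%type.

Fixpoint ch (phi : form m Var) (I : interval) {struct phi} : Ch phi :=
  match phi return Ch phi with
  | FPi | FVar _ => tt
  | FNeg a => ch a I
  | FAnd a b => (ch a I, ch b I)
  | FK i a => fun t => exists J, RK i I J /\ (label J, ch a J) = t
  | FC Gam a => fun t => exists J, RC Gam I J /\ (label J, ch a J) = t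
  | FA a => fun t => exists J, RA I J /\ (label J, ch a J) = t
  | FBbar a => fun t => exists J, RBbar I J /\ (label J, ch a J) = t
  | FN a => fun t => exists J, RN I J /\ (label J, ch a J) = t
  end.

Definition MCT (phi : form m Var) (I : interval) : MCTtype phi := (label I, ch phi I).

End ISRL.

(* Main.v *)
Require Import Defs.
From HB Require Import structures.
From mathcomp Require Import all_boot.
From Stdlib Require Import Relation_Operators FunctionalExtensionality PropExtensionality.

Set Implicit Arguments. Unset Strict Implicit. Unset Printing Implicit Defensive.

Section H.
Variables (m : nat) (L ACT : 'I_m.+1 -> finType) (Var : finType)
  (IS : ISRL L ACT Var) (aut : Var -> dfa (gstate L)).

Lemma chainP_cat T (R : T -> T -> Prop) x a b :
  chainP R x (a ++ b) <-> chainP R x a /\ chainP R (last x a) b.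
Proof. elim: a x => [|y a IH] x /=; [tauto| rewrite IH; tauto]. Qed.

Lemma allPr_cat T (P : T -> Prop) a b :
  allPr P (a ++ b) <-> allPr P a /\ allPr P b.
Proof. elim: a => [|y a IH] /=; [tauto| rewrite IH; tauto]. Qed.

Lemma allPr_last T (P : T -> Prop) x s : P x -> allPr P s -> P (last x s).
Proof. elim: s x => [|y s IH] x //= Px [Py H]; exact: IH. Qed.

Lemma gof_cat (s u : mstate L) : gof IS (s ++ u) = last (gof IS s) u.
Proof. by rewrite /gof last_cat. Qed.

Lemma is_state_cat (s u : mstate L) : is_state IS s ->
  (is_state IS (s ++ u) <-> chainP (tG IS) (gof IS s) u).
Proof.
case: s => [|g0 r] //= [-> Hc]; rewrite chainP_cat /gof /=; tauto.
Qed.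

Definition ext (u v : seq (gstate L)) := exists g, v = rcons u g.

Lemma chain_pref (s u0 : mstate L) rest :
  chainP (@tM _ _) (s ++ u0) rest -> exists U, rest = map (cat s) U /\ chainP ext u0 U.
Proof.
elim: rest u0 => [|t rest IH] u0 /=; first by exists [::].
move=> [[g Hg] Hc]. rewrite Hg rcons_cat in Hc.
have [U [-> HU]] := IH _ Hc.
exists (rcons u0 g :: U); split; first by rewrite /= Hg rcons_cat.
by split => //; exists g.
Qed.

Lemma chain_ext (s : mstate L) u0 U : chainP ext u0 U -> chainP (@tM _ _) (s ++ u0) (map (cat s) U).
Proof.
elim: U u0 => [|v U IH] u0 //= [[g ->] Hc]; split; first by exists g; rewrite rcons_cat.
exact: IH.
Qed.

Lemma transport (s s' : mstate L) u0 J : is_state IS s -> is_state IS s' ->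
  gof IS s = gof IS s' -> is_interval IS J -> ifirst J = s ++ u0 ->
  exists J', is_interval IS J' /\ ifirst J' = s' ++ u0 /\ gI IS J = gI IS J'.
Proof.
move=> Hs Hs' Hg; case: J => [|j r] //= [Hall Hch] Hj; subst j.
have [U [Er HU]] := chain_pref Hch; subst r.
exists (map (cat s') (u0 :: U)); split; last split => //.
- split; last exact: chain_ext.
  have : allPr (is_state IS) (map (cat s) (u0 :: U)) by move: Hall; rewrite /=.
  elim: (u0 :: U) => [|v W IH] //= [H1 H2]; split; last exact: IH.
  by apply/(is_state_cat _ Hs'); rewrite -Hg; apply/(is_state_cat _ Hs).
- change (map (gof IS) (map (cat s) (u0 :: U)) = map (gof IS) (map (cat s') (u0 :: U))).
  rewrite -!map_comp.
  by apply: eq_map => v /=; rewrite !gof_cat Hg.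
Qed.

Lemma is_interval_cat I I1 : I <> [::] -> I1 <> [::] ->
  (is_interval IS (I ++ I1) <-> is_interval IS I /\ is_interval IS I1 /\ tM (ilast I) (ifirst I1)).
Proof.
case: I => [|i r] // _; case: I1 => [|j r1] // _.
rewrite /= allPr_cat chainP_cat /=; tauto.
Qed.

Lemma gof_first (I : interval L) : gof IS (ifirst I) = head (ginit IS) (gI IS I).
Proof. by case: I. Qed.

Lemma gof_last (I : interval L) : gof IS (ilast I) = last (ginit IS) (gI IS I).
Proof. by rewrite /gI /ilast -(last_map (gof IS)). Qed.

Lemma label_gI I I' : gI IS I = gI IS I' -> label IS aut I = label IS aut I'.
Proof.
move=> E; rewrite /label !gof_first !gof_last /ipi -(size_map (gof IS) I)
  -(size_map (gof IS) I'); rewrite -/(gI IS I) -/(gI IS I') E //.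
Qed.

Lemma ilast_state I : is_interval IS I -> is_state IS (ilast I).
Proof. case: I => [|i r] //= [[Hi Hr] _]; exact: (allPr_last Hi Hr). Qed.

Lemma forall2P_src i (x x' y : interval L) : gI IS x = gI IS x' ->
  forall2P (simS IS i) x y -> forall2P (simS IS i) x' y.
Proof.
elim: x x' y => [|a x IH] [|a' x'] [|b y] //= [Ea Ex] [Hs Hr]; split.
- by rewrite /simS -Ea.
- exact: IH Hr.
Qed.

Definition simR (R : interval L -> interval L -> Prop) :=
  forall I I' J, is_interval IS I -> is_interval IS I' -> gI IS I = gI IS I' -> R I J ->
  exists J', R I' J' /\ is_interval IS J /\ is_interval IS J' /\ gI IS J = gI IS J'.

Lemma simRK i : simR (RK IS i).
Proof.
move=> I I' J _ HI' E [HJ Hf]; exists J; do !split => //; exact: forall2P_src Hf.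
Qed.

Lemma RC_tgt Gam I J : RC IS Gam I J -> is_interval IS J.
Proof. elim => [x y [_ [i _ [H _]]] | x y z _ _ _ H] //. Qed.

Lemma RC_src Gam I I' J : is_interval IS I' -> gI IS I = gI IS I' ->
  RC IS Gam I J -> RC IS Gam I' J.
Proof.
move=> HI' E H; move: I' HI' E; elim: H => [x y [_ [i Hi [HJ Hf]]] | x y z _ IH1 H2 _] I' HI' E.
- apply: t_step; split => //; exists i => //; split => //; exact: forall2P_src Hf.
- apply: t_trans; [exact: (IH1 I' HI' E)|exact: H2].
Qed.

Lemma simRC Gam : simR (RC IS Gam).
Proof.
move=> I I' J HI HI' E H; exists J; do !split => //.
- exact: RC_src H.
- exact: RC_tgt H.
- exact: RC_tgt H.
Qed.

Lemma simRA : simR (RA IS).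
Proof.
move=> I I' J HI HI' E [HJ Hf].
have [J' [H1 [H2 H3]]] := transport (u0 := [::]) (ilast_state HI) (ilast_state HI')
  (ltac:(by rewrite !gof_last E)) HJ (ltac:(by rewrite cats0)).
by exists J'; do !split => //; rewrite H2 cats0.
Qed.

Lemma simRN : simR (RN IS).
Proof.
move=> I I' J HI HI' E [HJ [g Hf]].
have [J' [H1 [H2 H3]]] := transport (u0 := [:: g]) (ilast_state HI) (ilast_state HI')
  (ltac:(by rewrite !gof_last E)) HJ (ltac:(by rewrite cats1)).
by exists J'; do !split => //; exists g; rewrite H2 cats1.
Qed.

Lemma nonnil I : is_interval IS I -> I <> [::].
Proof. by case: I. Qed.

Lemma simRB : simR (RBbar IS).
Proof.
move=> I I' J HI HI' E [HJ [I1 [HI1 EJ]]]; subst J.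
have [_ [_ [g Hg]]] := (is_interval_cat (nonnil HI) (nonnil HI1)).1 HJ.
have [I1' [H1 [H2 H3]]] := transport (u0 := [:: g]) (ilast_state HI) (ilast_state HI')
  (ltac:(by rewrite !gof_last E)) HI1 (ltac:(by rewrite cats1)).
have HJ' : is_interval IS (I' ++ I1').
  apply/(is_interval_cat (nonnil HI') (nonnil H1)); do !split => //.
  by exists g; rewrite H2 cats1.
exists (I' ++ I1'); do !split => //.
- by exists I1'.
- by rewrite /gI !map_cat -/(gI IS I) -/(gI IS I1) -/(gI IS I') -/(gI IS I1') E H3.
Qed.

Lemma set_eq (R : interval L -> interval L -> Prop) (A : Type) (f : interval L -> A) I I' :
  simR R -> (forall J J', is_interval IS J -> is_interval IS J' -> gI IS J = gI IS J' -> f J = f J') ->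
  is_interval IS I -> is_interval IS I' -> gI IS I = gI IS I' ->
  (fun t => exists J, R I J /\ f J = t) = (fun t => exists J, R I' J /\ f J = t).
Proof.
move=> HR Hf HI HI' E; apply: functional_extensionality => t.
apply: propositional_extensionality; split => -[J [HJ <-]].
- have [J' [H1 [H2 [H3 H4]]]] := HR _ _ _ HI HI' E HJ.
  by exists J'; split => //; rewrite (Hf J' J).
- have [J' [H1 [H2 [H3 H4]]]] := HR _ _ _ HI' HI (esym E) HJ.
  by exists J'; split => //; rewrite (Hf J' J).
Qed.

Lemma ch_gI phi : forall I I', is_interval IS I -> is_interval IS I' -> gI IS I = gI IS I' ->
  ch IS aut phi I = ch IS aut phi I'.
Proof.
elim: phi => [|p|a IH|a IHa b IHb|i a IH|Gam a IH|a IH|a IH|a IH] I I' HI HI' E //=.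
- exact: IH.
- by rewrite (IHa I I') // (IHb I I').
- have Hf : forall J J', is_interval IS J -> is_interval IS J' -> gI IS J = gI IS J' ->
      (label IS aut J, ch IS aut a J) = (label IS aut J', ch IS aut a J').
    by move=> J J' HJ HJ' EJ; rewrite (label_gI EJ) (IH J J').
  exact (set_eq (f := fun J => (label IS aut J, ch IS aut a J)) (simRK (i:=i)) Hf HI HI' E).
- have Hf : forall J J', is_interval IS J -> is_interval IS J' -> gI IS J = gI IS J' ->
      (label IS aut J, ch IS aut a J) = (label IS aut J', ch IS aut a J').
    by move=> J J' HJ HJ' EJ; rewrite (label_gI EJ) (IH J J').
  exact (set_eq (f := fun J => (label IS aut J, ch IS aut a J)) (simRC (Gam:=Gam)) Hf HI HI' E).
- have Hf : forall J J', is_interval IS J -> is_interval IS J' -> gI IS J = gI IS J' ->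
      (label IS aut J, ch IS aut a J) = (label IS aut J', ch IS aut a J').
    by move=> J J' HJ HJ' EJ; rewrite (label_gI EJ) (IH J J').
  exact (set_eq (f := fun J => (label IS aut J, ch IS aut a J)) simRA Hf HI HI' E).
- have Hf : forall J J', is_interval IS J -> is_interval IS J' -> gI IS J = gI IS J' ->
      (label IS aut J, ch IS aut a J) = (label IS aut J', ch IS aut a J').
    by move=> J J' HJ HJ' EJ; rewrite (label_gI EJ) (IH J J').
  exact (set_eq (f := fun J => (label IS aut J, ch IS aut a J)) simRB Hf HI HI' E).
- have Hf : forall J J', is_interval IS J -> is_interval IS J' -> gI IS J = gI IS J' ->
      (label IS aut J, ch IS aut a J) = (label IS aut J', ch IS aut a J').
    by move=> J J' HJ HJ' EJ; rewrite (label_gI EJ) (IH J J').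
  exact (set_eq (f := fun J => (label IS aut J, ch IS aut a J)) simRN Hf HI HI' E).
Qed.

End H.

Theorem mainTheorem9 (m : nat) (L ACT : 'I_m.+1 -> finType) (Var : finType)
  (IS : ISRL L ACT Var) (aut : Var -> dfa (gstate L))
  (Haut : forall p : Var, minimal_dfa_for (aut p) (lambda IS p))
  (phi : form m Var) (I I' : interval L) :
  is_interval IS I -> is_interval IS I' -> gI IS I = gI IS I' ->
  MCT IS aut phi I = MCT IS aut phi I'.
Proof.
move=> HI HI' E; rewrite /MCT (label_gI aut E) (ch_gI aut phi HI HI' E) //.
Qed.
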